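(* Let $R_t\in\mathbb R^{K\times K}$ and $M_t\in\mathbb R^{d\times d}$ be symmetric positive definite, $G_t\in\mathbb R^{K\times d}$, $r_t^\star,\varepsilon_t^\theta\in\mathbb R^K$, $r_t=r_t^\star-\varepsilon_t^\theta$, and $\ell_t(u;r)=\frac12\|r-G_tu\|^2_{R_t^{-1}}$. Assume $\|\varepsilon_t^\theta\|_{R_t^{-1}}\le B_t^\theta$ and $G_t^\top R_t^{-1}G_t\preceq\alpha_tM_t$ for some $B_t^\theta\ge0$, $\alpha_t\ge0$. Then for every pair $m,v\in\mathbb R^d$, $$\ell_t(m;r_t)-\ell_t(v;r_t)\le\ell_t(m;r_t^\star)-\ell_t(v;r_t^\star)+\frac{\alpha_t}{2}\|m-v\|^2_{M_t}+\frac12(B_t^\theta)^2.$$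
   Context: $\|a\|^2_{M}=a^\top Ma$; $\preceq$ is the Loewner order. In the application, $M_t$ is the pre-update precision of the discrepancy state, $r_t^\star$ the residual against the oracle projected simulator anchor, $\varepsilon_t^\theta$ the anchor error, and $r_t$ the residual used by the discrepancy update. *)

(* Defs.v *)
From HB Require Import structures.
From mathcomp Require Import all_boot all_order all_algebra.
Set Implicit Arguments. Unset Strict Implicit. Unset Printing Implicit Defensive.
Import Order.TTheory GRing.Theory Num.Theory.
Local Open Scope ring_scope.

Definition sqnorm (R : realFieldType) (n : nat) (M : 'M[R]_n) (a : 'cV[R]_n) : R :=
  ((a^T *m M *m a) 0 0).

Definition spd (R : realFieldType) (n : nat) (M : 'M[R]_n) : Prop :=
  M^T = M /\ forall x : 'cV[R]_n, x != 0 -> 0 < sqnorm M x.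

Definition loewner_le (R : realFieldType) (n : nat) (A B : 'M[R]_n) : Prop :=
  forall x : 'cV[R]_n, 0 <= sqnorm (B - A) x.

Definition ell (R : realFieldType) (K d : nat) (Rt : 'M[R]_K) (G : 'M[R]_(K, d))
  (u : 'cV[R]_d) (r : 'cV[R]_K) : R :=
  2^-1 * sqnorm (invmx Rt) (r - G *m u).

(* Main.v *)
Require Import Defs.
From HB Require Import structures.
From mathcomp Require Import all_boot all_order all_algebra.
From mathcomp Require Import lra.
Import Order.TTheory GRing.Theory Num.Theory.
Set Implicit Arguments. Unset Strict Implicit.
Local Open Scope ring_scope.

Definition bf (R : realFieldType) (n : nat) (P : 'M[R]_n) (x y : 'cV[R]_n) : R :=
  (x^T *m P *m y) 0 0.

Lemma sq_bf (R : realFieldType) n (P : 'M[R]_n) x : sqnorm P x = bf P x x.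
Proof. by []. Qed.

Lemma bfDr (R : realFieldType) n (P : 'M[R]_n) x y z :
  bf P x (y - z) = bf P x y - bf P x z.
Proof. by rewrite /bf mulmxBr !mxE. Qed.

Lemma bfDl (R : realFieldType) n (P : 'M[R]_n) x y z :
  bf P (y - z) x = bf P y x - bf P z x.
Proof. by rewrite /bf linearB /= !mulmxBl !mxE. Qed.

Lemma bf_sym (R : realFieldType) n (P : 'M[R]_n) x y :
  P^T = P -> bf P x y = bf P y x.
Proof.
move=> sP; rewrite /bf; transitivity ((x^T *m P *m y)^T 0 0); first by rewrite [RHS]mxE.
by rewrite !trmx_mul trmxK sP mulmxA.
Qed.

Lemma inv_sym (R : realFieldType) n (M : 'M[R]_n) : spd M -> (invmx M)^T = invmx M.
Proof. by case=> sM _; rewrite trmx_inv sM. Qed.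

Lemma psd_of_spd (R : realFieldType) n (M : 'M[R]_n) x : spd M -> 0 <= sqnorm M x.
Proof.
case=> _ pM; have [->|nz] := eqVneq x 0.
  by rewrite /sqnorm mulmx0 mxE.
exact/ltW/pM.
Qed.

Lemma inv_psd (R : realFieldType) n (M : 'M[R]_n) x : spd M -> 0 <= sqnorm (invmx M) x.
Proof.
move=> hM; case: (boolP (M \in unitmx)) => uM; last first.
  by rewrite invmx_out ?inE //; apply: psd_of_spd.
have hx : x = M *m (invmx M *m x) by rewrite mulmxA mulmxV // mul1mx.
move: hx; move: (invmx M *m x) => y hx.
have -> : sqnorm (invmx M) x = sqnorm M y.
  rewrite /sqnorm hx trmx_mul hM.1 -!mulmxA (mulmxA M (invmx M)) mulmxV //.
  by rewrite mul1mx.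
exact: psd_of_spd.
Qed.

Lemma sqnormZB (R : realFieldType) n (a : R) (A C : 'M[R]_n) x :
  sqnorm (a *: A - C) x = a * sqnorm A x - sqnorm C x.
Proof. by rewrite /sqnorm mulmxBr mulmxBl -scalemxAr -scalemxAl !mxE. Qed.

Lemma final_ineq (R : realFieldType) (t q a b c s1 s2 s3 s4 s6 : R) :
 a - b = c -> 0 <= s3 - c - (c - s4) -> s4 = s6 -> 0 <= t - s6 -> s3 <= q ->
  2^-1 * (s1 - 2 * b + s3) - 2^-1 * (s2 - 2 * a + s3) <=
  2^-1 * s1 - 2^-1 * s2 + 2^-1 * t + 2^-1 * q.
Proof. move=> h1 h2 h3 h4 h5.
have : 2 * c <= t + q by lra.
lra. Qed.

Theorem corollary2 (R : realFieldType) (K d : nat)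
  (Rt : 'M[R]_K) (Mt : 'M[R]_d) (Gt : 'M[R]_(K, d))
  (rstar eps : 'cV[R]_K) (B alpha : R) :
  spd Rt -> spd Mt ->
  0 <= B -> 0 <= alpha ->
  sqnorm (invmx Rt) eps <= B ^+ 2 ->
  loewner_le (Gt^T *m invmx Rt *m Gt) (alpha *: Mt) ->
  forall m v : 'cV[R]_d,
    ell Rt Gt m (rstar - eps) - ell Rt Gt v (rstar - eps)
    <= ell Rt Gt m rstar - ell Rt Gt v rstar
       + alpha / 2 * sqnorm Mt (m - v) + 2^-1 * B ^+ 2.
Proof.
move=> hR hM hB ha heps hL m v.
set P := invmx Rt.
have sP : P^T = P by apply: inv_sym.
set w := m - v.
have hsub : forall u : 'cV[R]_K, sqnorm P (u - eps)
    = sqnorm P u - 2 * bf P eps u + sqnorm P eps.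
  move=> u; rewrite !sq_bf bfDl !bfDr (@bf_sym _ _ _ eps u sP); lra.
have e1 : forall u, rstar - eps - Gt *m u = (rstar - Gt *m u) - eps.
  by move=> u; rewrite addrAC.
rewrite /ell !e1 !hsub.
have hw : (rstar - Gt *m v) - (rstar - Gt *m m) = Gt *m w.
  by rewrite /w mulmxBr opprB addrC addrA subrK.
have hdiff : bf P eps (rstar - Gt *m v) - bf P eps (rstar - Gt *m m)
    = bf P eps (Gt *m w) by rewrite -bfDr hw.
have hpsd := inv_psd (eps - Gt *m w) hR.
rewrite !sq_bf bfDl !bfDr (@bf_sym _ _ _ (Gt *m w) eps sP) -!sq_bf in hpsd.
have hG : sqnorm P (Gt *m w) = sqnorm (Gt^T *m P *m Gt) w.
  by rewrite /sqnorm trmx_mul !mulmxA.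
have hL' := hL w.
rewrite sqnormZB in hL'.
move: hdiff hpsd hG hL' heps.
set a := bf P eps (rstar - Gt *m v); set b := bf P eps (rstar - Gt *m m).
set c := bf P eps (Gt *m w).
set s1 := sqnorm P (rstar - Gt *m m); set s2 := sqnorm P (rstar - Gt *m v).
set s3 := sqnorm P eps; set s4 := sqnorm P (Gt *m w).
set s5 := sqnorm Mt w; set s6 := sqnorm (Gt^T *m P *m Gt) w.
clearbody a b c s1 s2 s3 s4 s5 s6 => h1 h2 h3 h4 h5.
have e2 : alpha / 2 * s5 = 2^-1 * (alpha * s5) by rewrite mulrAC mulrC.
rewrite e2.
move: (alpha * s5) (B ^+ 2) h4 h5 => t q h4 h5.
clear -h1 h2 h3 h4 h5.
exact (@final_ineq _ t q a b c s1 s2 s3 s4 s6 h1 h2 h3 h4 h5).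

Qed.
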